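(* Let $(P,\le,A_1\ldots A_k)$ be a regular poset with node tree $(\mathcal{N},\prec)$, and suppose $M$ is a descendant of $N$ in $(\mathcal{N},\prec)$. Then (1) $\mathrm{width}(M)\le\mathrm{width}(N)$; (2) if $\mathrm{width}(M)=\mathrm{width}(N)$, then $\mathrm{surplus}(M)\le\mathrm{surplus}(N)$.
   Context: Let $(P,\le)$ be a finite poset of width $w$. For $A\subseteq P$ let $A{\uparrow}=\{y: x\le y\text{ for some }x\in A\}$, $A{\downarrow}=\{y: y\le x\text{ for some }x\in A\}$. For maximal antichains $A,B$ write $A\sqsubseteq B$ if $A\subseteq B{\downarrow}$, and $A\sqsubset B$ if also $A\ne B$. For disjoint antichains $A\sqsubset B$, $(A,B,<)$ is the bipartite graph with classes $A,B$ and edges $(a<b)$ for $a\in A,b\in B$, $a<b$; it is regular if every edge lies in a perfect matching. A regular poset $(P,\le,A_1\ldots A_k)$: $A_1,\dots,A_k$ are maximum antichains partitioning $P$, $(\{A_1,\dots,A_k\},\sqsubseteq)$ is a linear order with minimum $A_1$ and maximum $A_2$, $a<b$ for all $a\in A_1,b\in A_2$, and for every $t\in[2,k]$ and every $A_p\sqsubset A_s$ consecutive in $(\{A_1,\dots,A_t\},\sqsubseteq)$ the graph $(A_p,A_s,<)$ is regular. A node is a bipartite graph $(X,Y,<)$ where, for some such consecutive pair $A_p\sqsubset A_s$ (at some stage $t$), $X\subseteq A_p$, $Y\subseteq A_s$ and $X\cup Y$ is the vertex set of a connected component of $(A_p,A_s,<)$. Its width is $\mathrm{width}(N)=|X|=|Y|$;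 $\mathrm{Int}(N)=X{\uparrow}\cap Y{\downarrow}$; its surplus $\mathrm{surplus}(N)$ is the largest $k$ such that $|A{\uparrow}\cap Y|\ge\min\{|A|+k,|Y|\}$ for all non-empty $A\subseteq X$, with $\mathrm{surplus}(N)=\infty$ if $N$ is a complete bipartite graph. Node tree $(\mathcal{N},\prec)$: $\mathcal{N}$ is the set of all nodes; when for $t\ge3$ the antichain $A_t$ is inserted between $A_p\sqsubset A_s$ consecutive at stage $t-1$, each node $M$ of $(A_p,A_t,<)$ or $(A_t,A_s,<)$ is declared a child of the unique node $N$ of $(A_p,A_s,<)$ with $\mathrm{Int}(M)\subset\mathrm{Int}(N)$. This gives a rooted tree with root $(A_1,A_2,<)$; descendants are defined via the child relation. *)

(* Defs.v *)
From HB Require Import structures.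
From Stdlib Require Import Relation_Operators.
From mathcomp Require Import all_boot all_order.
Set Implicit Arguments. Unset Strict Implicit. Unset Printing Implicit Defensive.
Import Order.Theory.

Section RegularPosets.
Context {d : Order.disp_t} {T : finPOrderType d}.
Local Open Scope order_scope.

Definition upset (A : {set T}) : {set T} := [set y | [exists x in A, x <= y]].
Definition downset (A : {set T}) : {set T} := [set y | [exists x in A, y <= x]].

Definition antichain (A : {set T}) : bool :=
  [forall x in A, forall y in A, (x <= y) ==> (x == y)].

Definition max_antichain (A : {set T}) : bool :=
  antichain A && [forall B : {set T}, antichain B ==> (#|B| <= #|A|)%N].

Definition sqle (A B : {set T}) : bool := A \subset downset B.
Definition sqlt (A B : {set T}) : bool := sqle A B && (A != B).

Definition is_pm (A B : {set T}) (E : {set T * T}) : bool :=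
  [&& [forall e in E, [&& e.1 \in A, e.2 \in B & e.1 < e.2]],
      [forall a in A, #|[set e in E | e.1 == a]| == 1%N] &
      [forall b in B, #|[set e in E | e.2 == b]| == 1%N]].

Definition regular_bip (A B : {set T}) : Prop :=
  forall a b, a \in A -> b \in B -> a < b -> exists2 E, is_pm A B E & (a, b) \in E.

Definition consecutive (A : nat -> {set T}) (t p s : nat) : Prop :=
  [/\ (1 <= p <= t)%N, (1 <= s <= t)%N, sqlt (A p) (A s) &
      forall q, (1 <= q <= t)%N -> ~ (sqlt (A p) (A q) /\ sqlt (A q) (A s))].

Record regular_poset (k : nat) (A : nat -> {set T}) : Prop := {
  rp_k : (2 <= k)%N;
  rp_max : forall i, (1 <= i <= k)%N -> max_antichain (A i);
  rp_disj : forall i j, (1 <= i <= k)%N -> (1 <= j <= k)%N -> i != j ->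
              [disjoint A i & A j];
  rp_cover : forall x : T, exists2 i, (1 <= i <= k)%N & x \in A i;
  rp_linear : forall i j, (1 <= i <= k)%N -> (1 <= j <= k)%N ->
              sqle (A i) (A j) \/ sqle (A j) (A i);
  rp_min : forall i, (1 <= i <= k)%N -> sqle (A 1%N) (A i);
  rp_maxel : forall i, (1 <= i <= k)%N -> sqle (A i) (A 2%N);
  rp_12 : forall a b, a \in A 1%N -> b \in A 2%N -> a < b;
  rp_reg : forall t p s, (2 <= t <= k)%N -> consecutive A t p s ->
              regular_bip (A p) (A s)
}.

Definition bip_adj (A B : {set T}) : rel T :=
  fun x y => ((x \in A) && (y \in B) && (x < y)) || ((y \in A) && (x \in B) && (y < x)).

Definition is_component (A B C : {set T}) : Prop :=
  exists2 v, v \in A :|: B & C = [set y | connect (bip_adj A B) v y].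

Definition node_of (A B X Y : {set T}) : Prop :=
  [/\ X \subset A, Y \subset B & is_component A B (X :|: Y)].

Definition is_node (k : nat) (A : nat -> {set T}) (N : {set T} * {set T}) : Prop :=
  exists t p s, [/\ (2 <= t <= k)%N, consecutive A t p s & node_of (A p) (A s) N.1 N.2].

Definition node_width (N : {set T} * {set T}) : nat := #|N.1|.

Definition Int (N : {set T} * {set T}) : {set T} := upset N.1 :&: downset N.2.

Definition complete_bip (X Y : {set T}) : bool := [forall x in X, forall y in Y, x < y].

Definition surplus_ok (X Y : {set T}) (k : nat) : bool :=
  [forall B : {set T}, ((B != set0) && (B \subset X)) ==>
     (minn (#|B| + k) #|Y| <= #|upset B :&: Y|)%N].

(* surplus: None stands for infinity (complete bipartite graph); otherwise the
   largest k with surplus_ok (any such k is < |Y|, so the bounded max is the max) *)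
Definition surplus (N : {set T} * {set T}) : option nat :=
  if complete_bip N.1 N.2 then None
  else Some (\max_(j < #|N.2|.+1 | surplus_ok N.1 N.2 j) j)%N.

Definition child (k : nat) (A : nat -> {set T}) (M N : {set T} * {set T}) : Prop :=
  exists t p s, [/\ (3 <= t <= k)%N, consecutive A t.-1 p s,
     sqlt (A p) (A t) /\ sqlt (A t) (A s),
     node_of (A p) (A s) N.1 N.2 /\ Int M \proper Int N &
     node_of (A p) (A t) M.1 M.2 \/ node_of (A t) (A s) M.1 M.2].

Definition descendant (k : nat) (A : nat -> {set T}) : {set T} * {set T} -> {set T} * {set T} -> Prop :=
  clos_trans _ (child k A).

End RegularPosets.

(* order on nat ∪ {∞}, None = ∞ *)
Definition le_ext (a b : option nat) : bool :=
  match a, b with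
  | _, None => true
  | None, Some _ => false
  | Some m, Some n => (m <= n)%N
  end.

(* Main.v *)
Require Import Defs.
From Stdlib Require Import Relation_Operators.
From mathcomp Require Import all_boot all_order.
From mathcomp Require Import zify.
Set Implicit Arguments. Unset Strict Implicit. Unset Printing Implicit Defensive.
Import Order.Theory.

Section Aux.
Context {d : Order.disp_t} {T : finPOrderType d}.
Local Open Scope order_scope.
Implicit Types (A B C X Y Z : {set T}).

Lemma ac_eq A x y : antichain A -> x \in A -> y \in A -> x <= y -> x = y.
Proof. by move=> /forallP/(_ x)/implyP H xA yA; move/forallP/(_ y)/implyP: (H xA) => /(_ yA)/implyP H2 /H2/eqP. Qed.

Lemma max_comp A x : max_antichain A -> exists2 a, a \in A & (a <= x) || (x <= a).
Proof.
move=> /andP[acA /forallP mx].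
case: (boolP [exists a in A, (a <= x) || (x <= a)]) => [/existsP[a /andP[aA H]]|H].
  by exists a.
exfalso.
have xA : x \notin A.
  apply/negP=> xA; move/negP: H; apply; apply/existsP; exists x; by rewrite xA lexx.
have acx : antichain (x |: A).
  apply/forallP=> y; apply/implyP=> yA; apply/forallP=> z; apply/implyP=> zA; apply/implyP=> yz.
  move: yz yA zA; rewrite !inE => yz /orP[/eqP Ey|yA] /orP[/eqP Ez|zA]; subst; rewrite ?eqxx //.
  - exfalso; move/negP: H; apply; apply/existsP; exists z; by rewrite zA (yz : x <= z) orbT.
  - exfalso; move/negP: H; apply; apply/existsP; exists y; by rewrite yA (yz : y <= x).
  - by apply/eqP; apply: ac_eq acA yA zA yz.
move: (mx (x |: A)); rewrite acx /= cardsU1 xA /=; by rewrite ltnn.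
Qed.

Lemma max_nonempty A (x : T) : max_antichain A -> exists a, a \in A.
Proof.
move=> /andP[_ /forallP /(_ [set x])].
have -> : antichain [set x].
  apply/forallP=> y; apply/implyP; rewrite inE=>/eqP->; apply/forallP=> z; apply/implyP; rewrite inE=>/eqP->.
  by rewrite eqxx implybT.
rewrite cards1 /= => H; apply/set0Pn; rewrite -card_gt0; exact: H.
Qed.

Lemma up_of_sqle A B : max_antichain A -> antichain B -> sqle A B -> B \subset upset A.
Proof.
move=> mA acB sAB; apply/subsetP=> b bB; rewrite inE.
have [a aA /orP[ab|ba]] := max_comp b mA; apply/existsP; exists a; rewrite aA //=.
move/subsetP: sAB => /(_ a aA); rewrite inE => /existsP[b' /andP[b'B ab']].
have bb' : b = b' by apply: ac_eq acB bB b'B (le_trans ba ab').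
by subst b'; rewrite (@le_anti _ _ a b) ?lexx // ab' ba.
Qed.

Lemma sqle_anti A B : antichain A -> antichain B -> sqle A B -> sqle B A -> A = B.
Proof.
have key : forall A B, antichain A -> antichain B -> sqle A B -> sqle B A -> A \subset B.
  move=> A' B' acA acB sAB sBA; apply/subsetP=> a aA.
  move/subsetP: sAB => /(_ a aA); rewrite inE => /existsP[b /andP[bB ab]].
  move/subsetP: sBA => /(_ b bB); rewrite inE => /existsP[a' /andP[a'A ba']].
  have aa' : a = a' by apply: ac_eq acA aA a'A (le_trans ab ba').
  subst a'; by rewrite (@le_anti _ _ a b) ?ab ?ba'.
move=> acA acB sAB sBA; apply/eqP; rewrite eqEsubset; apply/andP; split; exact: key.
Qed.

Lemma sqle_trans A B C : sqle A B -> sqle B C -> sqle A C.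
Proof.
move=> /subsetP sAB /subsetP sBC; apply/subsetP=> a /sAB; rewrite inE => /existsP[b /andP[bB ab]].
move: (sBC b bB); rewrite inE => /existsP[c /andP[cC bc]].
rewrite inE; apply/existsP; exists c; by rewrite cC (le_trans ab bc).
Qed.

Lemma lt_of_disj A B a b : [disjoint A & B] -> a \in A -> b \in B -> a <= b -> a < b.
Proof.
move=> dAB aA bB ab; rewrite lt_neqAle ab andbT; apply/eqP=> eab; subst b.
by rewrite (disjointFr dAB aA) in bB.
Qed.

Lemma comp_step A B X Y x y : [disjoint A & B] -> node_of A B X Y -> x \in X -> y \in B -> x < y -> y \in Y.
Proof.
move=> dAB [XA YB [v _ HC]] xX yB xy.
have : y \in X :|: Y.
  rewrite HC inE; have : x \in X :|: Y by rewrite inE xX.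
  rewrite HC inE => cx; apply: connect_trans cx (connect1 _).
  by rewrite /bip_adj (subsetP XA x xX) yB xy.
rewrite inE => /orP[yX|//]; by rewrite (disjointFr dAB (subsetP XA y yX)) in yB.
Qed.

Lemma comp_step2 A B X Y x y : [disjoint A & B] -> node_of A B X Y -> y \in Y -> x \in A -> x < y -> x \in X.
Proof.
move=> dAB [XA YB [v _ HC]] yY xA xy.
have : x \in X :|: Y.
  rewrite HC inE; have : y \in X :|: Y by rewrite inE yY orbT.
  rewrite HC inE => cy; apply: connect_trans cy (connect1 _).
  by rewrite /bip_adj xA (subsetP YB y yY) xy orbT.
rewrite inE => /orP[//|xY]; have := subsetP YB x xY; by rewrite (disjointFr dAB xA).
Qed.

Lemma card1_eq (S : {set T * T}) x y : #|S| == 1%N -> x \in S -> y \in S -> x = y.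
Proof. by move=> /cards1P[z ->]; rewrite !inE => /eqP-> /eqP->. Qed.

Lemma img_card (E : {set T * T}) (f g : T * T -> T) C :
  {in E &, injective f} -> {in E &, injective g} ->
  (forall c, c \in C -> exists2 e, e \in E & g e = c) ->
  #|[set f e | e in E & g e \in C]| = #|C|.
Proof.
move=> fI gI sur.
rewrite card_in_imset; last first.
  by move=> x y; rewrite !inE => /andP[xE _] /andP[yE _]; apply: fI.
transitivity #|[set g e | e in [set e in E | g e \in C]]|.
  by rewrite card_in_imset // => x y; rewrite !inE => /andP[xE _] /andP[yE _]; apply: gI.
apply: eq_card => c; apply/imsetP/idP=> [[e]|cC]; first by rewrite inE => /andP[_ ?] ->.
by have [e eE ec] := sur c cC; exists e => //; rewrite inE /= eE ec cC.
Qed.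

Section PM.
Variables (A B : {set T}) (E : {set T * T}).
Hypothesis pm : is_pm A B E.

Lemma pm_edge e : e \in E -> [/\ e.1 \in A, e.2 \in B & e.1 < e.2].
Proof. by case/and3P: pm => /forallP/(_ e)/implyP H _ _ /H/and3P[]. Qed.

Lemma pm_inj1 : {in E &, injective fst}.
Proof.
move=> e e' eE e'E h; case/and3P: pm => _ /forallP/(_ e.1)/implyP H _.
have [eA _ _] := pm_edge eE.
by apply: card1_eq (H eA) _ _; rewrite inE ?eE ?e'E ?h eqxx.
Qed.

Lemma pm_inj2 : {in E &, injective snd}.
Proof.
move=> e e' eE e'E h; case/and3P: pm => _ _ /forallP/(_ e.2)/implyP H.
have [_ eB _] := pm_edge eE.
by apply: card1_eq (H eB) _ _; rewrite inE ?eE ?e'E ?h eqxx.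
Qed.

Lemma pm_sur1 a : a \in A -> exists2 e, e \in E & e.1 = a.
Proof.
case/and3P: pm => _ /forallP/(_ a)/implyP H _ /H /eqP h.
have : #|[set e in E | e.1 == a]| > 0 by rewrite h.
by case/card_gt0P=> e; rewrite inE => /andP[? /eqP]; exists e.
Qed.

Lemma pm_sur2 b : b \in B -> exists2 e, e \in E & e.2 = b.
Proof.
case/and3P: pm => _ _ /forallP/(_ b)/implyP H /H /eqP h.
have : #|[set e in E | e.2 == b]| > 0 by rewrite h.
by case/card_gt0P=> e; rewrite inE => /andP[? /eqP]; exists e.
Qed.

Lemma pm_img1 C : C \subset A -> #|[set e.2 | e in E & e.1 \in C]| = #|C|.
Proof.
move=> CA; apply: img_card pm_inj2 pm_inj1 _ => c cC; exact: pm_sur1 (subsetP CA c cC).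
Qed.

Lemma pm_img2 C : C \subset B -> #|[set e.1 | e in E & e.2 \in C]| = #|C|.
Proof.
move=> CB; apply: img_card pm_inj1 pm_inj2 _ => c cC; exact: pm_sur2 (subsetP CB c cC).
Qed.

Lemma pm_width X Y : [disjoint A & B] -> node_of A B X Y -> #|X| = #|Y|.
Proof.
move=> dAB nd; have [XA YB _] := nd; apply/eqP; rewrite eqn_leq; apply/andP; split.
  rewrite -(pm_img1 XA); apply: subset_leq_card; apply/subsetP=> y /imsetP[e].
  rewrite inE => /andP[eE eX] ->; have [_ eB lt] := pm_edge eE; exact: comp_step dAB nd eX eB lt.
rewrite -(pm_img2 YB); apply: subset_leq_card; apply/subsetP=> y /imsetP[e].
rewrite inE => /andP[eE eY] ->; have [eA _ lt] := pm_edge eE; exact: comp_step2 dAB nd eY eA lt.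
Qed.

End PM.

Lemma exists_pm A B (x : T) : max_antichain A -> sqle A B -> [disjoint A & B] ->
  regular_bip A B -> exists E, is_pm A B E.
Proof.
move=> mA sAB dAB reg; have [a aA] := max_nonempty x mA.
move/subsetP: sAB => /(_ a aA); rewrite inE => /existsP[b /andP[bB ab]].
by have [E ? _] := reg a b aA bB (lt_of_disj dAB aA bB ab); exists E.
Qed.

Lemma surplus_mono X Y X' Y' : (complete_bip X' Y' -> complete_bip X Y) -> #|Y'| = #|Y| ->
  (forall j, surplus_ok X' Y' j -> surplus_ok X Y j) ->
  le_ext (surplus (X', Y')) (surplus (X, Y)).
Proof.
move=> hc hY hok; rewrite /surplus /=.
case cN: (complete_bip X Y); first by case: (complete_bip X' Y').
case cM: (complete_bip X' Y'); first by rewrite hc in cN.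
rewrite /= hY; apply/bigmax_leqP => i okM.
have okN := hok _ okM.
exact: (@leq_bigmax_cond _ (fun j : 'I_#|Y|.+1 => surplus_ok X Y j) (fun j : 'I_#|Y|.+1 => nat_of_ord j) i okN).
Qed.

Lemma child_mono k (A : nat -> {set T}) (M N : {set T} * {set T}) : regular_poset k A -> child k A M N ->
  (node_width M <= node_width N)%N /\
  (node_width M = node_width N -> le_ext (surplus M) (surplus N)).
Proof.
move=> rp [t [p [s [Ht Hc [Hpt Hts] [HN Hint] HM]]]].
have [ip is_ Hps Hno] := Hc.
have ipk : (1 <= p <= k)%N by lia.
have isk : (1 <= s <= k)%N by lia.
have itk : (1 <= t <= k)%N by lia.
have ipt : (1 <= p <= t)%N by lia.
have itt : (1 <= t <= t)%N by lia.
have ist : (1 <= s <= t)%N by lia.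
have t2 : (2 <= t <= k)%N by lia.
have t12 : (2 <= t.-1 <= k)%N by lia.
have iqt : forall q, (1 <= q <= t)%N -> q != t -> (1 <= q <= t.-1)%N by move=> q; lia.
have mp := rp_max rp ipk; have mt := rp_max rp itk; have ms := rp_max rp isk.
have acp : antichain (A p) by case/andP: mp.
have act : antichain (A t) by case/andP: mt.
have acs : antichain (A s) by case/andP: ms.
have [spt npt] := andP Hpt; have [sts nts] := andP Hts; have [sps nps] := andP Hps.
have neqi : forall i j, A i != A j -> i != j by move=> i j h; apply/eqP=> e; subst; rewrite eqxx in h.
have dpt := rp_disj rp ipk itk (neqi _ _ npt).
have dts := rp_disj rp itk isk (neqi _ _ nts).
have dps := rp_disj rp ipk isk (neqi _ _ nps).
have cpt : consecutive A t p t.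
  split=> //.
  move=> q hq [h1 h2]; have [sqt nqt] := andP h2.
  have [eq|neq] := eqVneq q t; first by subst; rewrite eqxx in nqt.
  apply: (Hno q); first exact: iqt.
  split => //; apply/andP; split; first exact: sqle_trans sqt sts.
  apply/eqP=> eqs; rewrite eqs in sqt.
  by move/eqP: nts; apply; apply: sqle_anti.
have cts : consecutive A t t s.
  split=> //.
  move=> q hq [h1 h2]; have [stq ntq] := andP h1.
  have [eq|neq] := eqVneq q t; first by subst; rewrite eqxx in ntq.
  apply: (Hno q); first exact: iqt.
  split => //; apply/andP; split; first exact: sqle_trans spt stq.
  apply/eqP=> eqp; rewrite -eqp in stq.
  by move/eqP: npt; apply; apply: sqle_anti.
have rpt := rp_reg rp (_ : (2 <= t <= k)%N) cpt.
have rts := rp_reg rp (_ : (2 <= t <= k)%N) cts.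
have rps := rp_reg rp (_ : (2 <= t.-1 <= k)%N) Hc.
have [_ _ [v _ _]] := HN.
have [Ept pmpt] := exists_pm v mp spt dpt (rpt t2).
have [Ets pmts] := exists_pm v mt sts dts (rts t2).
have [Eps pmps] := exists_pm v mp sps dps (rps t12).
case: N HN Hint => X Y; case: M HM => M1 M2; rewrite /node_width /Int /= => HM HN Hint.
have sInt := proper_sub Hint.
have [XA YA _] := HN.
have wN : #|X| = #|Y| := pm_width pmps dps HN.
case: HM => HM.
-
  have [M1A M2A _] := HM.
  have X'X : M1 \subset X.
    apply/subsetP=> x xX'; have xAp := subsetP M1A x xX'.
    have : x \in upset M1 :&: downset M2.
      rewrite !inE; apply/andP; split; first by apply/existsP; exists x; rewrite xX' lexx.
      move/subsetP: spt => /(_ x xAp); rewrite inE => /existsP[z /andP[zAt xz]].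
      apply/existsP; exists z; rewrite xz andbT.
      exact: comp_step dpt HM xX' zAt (lt_of_disj dpt xAp zAt xz).
    move/(subsetP sInt); rewrite !inE => /andP[/existsP[x0 /andP[x0X x0x]] _].
    by rewrite -(ac_eq acp (subsetP XA _ x0X) xAp x0x).
  split; first exact: subset_leq_card.
  move=> hw; have eX : M1 = X by apply/eqP; rewrite eqEcard X'X hw leqnn.
  subst M1.
  have wZ : #|X| = #|M2| := pm_width pmpt dpt HM.
  apply: surplus_mono.
  + move=> /forallP cM; apply/forallP=> x; apply/implyP=> xX; apply/forallP=> y; apply/implyP=> yY.
    have ys := subsetP YA y yY.
    have := subsetP (up_of_sqle mt acs sts) y ys; rewrite inE => /existsP[c /andP[cAt cy]].
    have cy' := lt_of_disj dts cAt ys cy.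
    have := subsetP (up_of_sqle mp act spt) c cAt; rewrite inE => /existsP[a /andP[aAp ac]].
    have ac' := lt_of_disj dpt aAp cAt ac.
    have aX : a \in X := comp_step2 dps HN yY aAp (lt_trans ac' cy').
    have cZ : c \in M2 := comp_step dpt HM aX cAt ac'.
    move: (cM x); rewrite xX /= => /forallP/(_ c); rewrite cZ /= => xc.
    exact: lt_trans xc cy'.
  + by rewrite -wZ wN.
  + move=> j okM; apply/forallP=> B; apply/implyP=> /andP[Bne BX].
    move/forallP: okM => /(_ B); rewrite Bne BX /= => hM.
    rewrite -wN wZ; apply: leq_trans hM _.
    have CA : upset B :&: M2 \subset A t by apply: subset_trans (subsetIr _ _) M2A.
    rewrite -(pm_img1 pmts CA).
    apply: subset_leq_card; apply/subsetP=> y /imsetP[e]; rewrite inE => /andP[eE].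
    rewrite !inE => /andP[/existsP[b /andP[bB be]] eZ] ->.
    have [_ eB lt] := pm_edge pmts eE; have bY : b < e.2 := le_lt_trans be lt.
    apply/andP; split; first by apply/existsP; exists b; rewrite bB (ltW bY).
    exact: comp_step dps HN (subsetP BX b bB) eB bY.
-
  have [M1A M2A _] := HM.
  have YY : M2 \subset Y.
    apply/subsetP=> y yM; have ys := subsetP M2A y yM.
    have : y \in upset M1 :&: downset M2.
      rewrite !inE; apply/andP; split; last by apply/existsP; exists y; rewrite yM lexx.
      have := subsetP (up_of_sqle mt acs sts) y ys; rewrite inE => /existsP[c /andP[cAt cy]].
      apply/existsP; exists c; rewrite cy andbT.
      exact: comp_step2 dts HM yM cAt (lt_of_disj dts cAt ys cy).
    move/(subsetP sInt); rewrite !inE => /andP[_ /existsP[y0 /andP[y0Y yy0]]].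
    by rewrite (ac_eq acs ys (subsetP YA _ y0Y) yy0).
  have wM : #|M1| = #|M2| := pm_width pmts dts HM.
  split; first by rewrite wM wN; exact: subset_leq_card.
  move=> hw; have eY : M2 = Y by apply/eqP; rewrite eqEcard YY -wM hw wN leqnn.
  subst M2.
  apply: surplus_mono => //.
  + move=> /forallP cM; apply/forallP=> x; apply/implyP=> xX; apply/forallP=> y; apply/implyP=> yY.
    have xp := subsetP XA x xX.
    move/subsetP: spt => /(_ x xp); rewrite inE => /existsP[c /andP[cAt xc]].
    have xc' := lt_of_disj dpt xp cAt xc.
    move/subsetP: sts => /(_ c cAt); rewrite inE => /existsP[y2 /andP[y2s cy2]].
    have cy2' := lt_of_disj dts cAt y2s cy2.
    have y2Y : y2 \in Y := comp_step dps HN xX y2s (lt_trans xc' cy2').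
    have cM1 : c \in M1 := comp_step2 dts HM y2Y cAt cy2'.
    move: (cM c); rewrite cM1 /= => /forallP/(_ y); rewrite yY /= => cy.
    exact: lt_trans xc' cy.
  + move=> j okM; apply/forallP=> B; apply/implyP=> /andP[Bne BX].
    have BA : B \subset A p := subset_trans BX XA.
    set B' := [set e.2 | e in Ept & e.1 \in B].
    have cB' : #|B'| = #|B| := pm_img1 pmpt BA.
    have B'M : B' \subset M1.
      apply/subsetP=> c /imsetP[e]; rewrite inE => /andP[eE eB] ->.
      have [_ eAt lt] := pm_edge pmpt eE.
      move/subsetP: sts => /(_ _ eAt); rewrite inE => /existsP[y2 /andP[y2s cy2]].
      have cy2' := lt_of_disj dts eAt y2s cy2.
      have y2Y : y2 \in Y := comp_step dps HN (subsetP BX _ eB) y2s (lt_trans lt cy2').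
      exact: comp_step2 dts HM y2Y eAt cy2'.
    have B'ne : B' != set0 by rewrite -card_gt0 cB' card_gt0.
    move/forallP: okM => /(_ B'); rewrite B'ne B'M /= cB' => hM.
    apply: leq_trans hM _; apply: subset_leq_card; apply/subsetP=> y.
    rewrite !inE => /andP[/existsP[c /andP[/imsetP[e] ]]].
    rewrite inE => /andP[eE eB] -> ey yY; rewrite yY andbT.
    have [_ _ lt] := pm_edge pmpt eE.
    by apply/existsP; exists e.1; rewrite eB (le_trans (ltW lt) ey).
Qed.

End Aux.

Theorem proposition10 (d : Order.disp_t) (T : finPOrderType d) (k : nat)
    (A : nat -> {set T}) (M N : {set T} * {set T}) :
  regular_poset k A -> descendant k A M N ->
  (node_width M <= node_width N)%N /\
  (node_width M = node_width N -> le_ext (surplus M) (surplus N)).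
Proof.
move=> rp; elim=> [x y /(child_mono rp) //|x y z _ [h1 h2] _ [h3 h4]].
split; first exact: leq_trans h1 h3.
move=> e.
have exy : node_width x = node_width y by apply/eqP; rewrite eqn_leq h1 e h3.
have eyz : node_width y = node_width z by rewrite -exy.
move: (h2 exy) (h4 eyz).
by case: (surplus x) => [a|]; case: (surplus y) => [b|]; case: (surplus z) => [c|] //=; apply: leq_trans.
Qed.
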